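(* Consider the uncertain control-affine system $$\dot x = f(x) + B(x)\left[u - \varphi(x)^\top \theta\right],\qquad x\in\mathbb{R}^n,\ u\in\mathbb{R}^m,$$ with unknown constant parameter $\theta\in\mathbb{R}^p$, smooth $f:\mathbb{R}^n\to\mathbb{R}^n$, smooth $B:\mathbb{R}^n\to\mathbb{R}^{n\times m}$ with columns $b_1,\dots,b_m$, and smooth $\varphi:\mathbb{R}^n\to\mathbb{R}^{p\times m}$ with columns $\varphi_1,\dots,\varphi_m$ (so the uncertainty $\Delta(x)^\top\theta=B(x)\varphi(x)^\top\theta$ lies in the span of $B(x)$, i.e. satisfies the matching condition). Suppose a uniformly bounded Riemannian metric $M(x)$ satisfies the stronger CCM conditions (defined in the context) for the nominal system $\dot x = f(x)+B(x)u$ with rate $\lambda>0$. Then the same metric $M(x)$ satisfies the stronger CCM conditions, with the same rate $\lambda$, for the true system, i.e. for the system $\dot x = f_\theta(x) + B(x)u$ with drift $f_\theta(x) := f(x) - B(x)\varphi(x)^\top\theta$ (for the value of $\theta$).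
   Context: A Riemannian metric $M(x)$ is a smooth, symmetric, positive definite matrix function on $\mathbb{R}^n$; uniformly bounded means $\alpha_1 I\preceq M(x)\preceq \alpha_2 I$ for constants $0<\alpha_1\le\alpha_2$. For a vector field $v$, $\partial_v M := \sum_i \frac{\partial M}{\partial x_i} v_i$. For a control-affine system $\dot x = g(x) + B(x)u$ with columns $b_i$ of $B$, the metric $M$ satisfies the stronger CCM (control contraction metric) conditions with rate $\lambda>0$ if, for all $x$ and all $\delta_x\neq 0$ with $\delta_x^\top M(x)B(x)=0$, $$\delta_x^\top\left(\frac{\partial g}{\partial x}^\top M + M\frac{\partial g}{\partial x} + \dot M + 2\lambda M\right)\delta_x\le 0,\qquad \dot M := \partial_g M,$$ and, for each $i=1,\dots,m$, $\partial_{b_i}M + \frac{\partial b_i}{\partial x}^\top M + M\frac{\partial b_i}{\partial x} = 0$ (each $b_i$ is a Killing vector field for $M$). *)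

(* Defs.v *)
From HB Require Import structures.
From mathcomp Require Import all_boot all_order all_algebra.
From mathcomp Require Import all_classical all_reals all_analysis.
Set Implicit Arguments. Unset Strict Implicit. Unset Printing Implicit Defensive.
Import Order.TTheory GRing.Theory Num.Theory.
Import numFieldNormedType.Exports.
Local Open Scope ring_scope.

Definition basis_vec (R : realType) (n : nat) (j : 'I_n) : 'cV[R]_n :=
  delta_mx j 0.

Definition partial (R : realType) (n : nat) (W : normedModType R)
  (F : 'cV[R]_n -> W) (j : 'I_n) (x : 'cV[R]_n) : W :=
  derive F x (basis_vec R j).

Fixpoint Ck (R : realType) (n : nat) (W : normedModType R) (k : nat)
  (F : 'cV[R]_n -> W) : Prop :=
  match k with
  | 0%N => True
  | k'.+1 => (forall x, differentiable F x) /\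
             (forall v : 'cV[R]_n, Ck k' (fun x => derive F x v))
  end.

Definition smooth (R : realType) (n : nat) (W : normedModType R)
  (F : 'cV[R]_n -> W) : Prop := forall k, Ck k F.

Definition jacobian (R : realType) (n : nat) (g : 'cV[R]_n -> 'cV[R]_n)
  (x : 'cV[R]_n) : 'M[R]_n :=
  \matrix_(i < n, j < n) (partial g j x) i 0.

Definition dirM (R : realType) (n : nat) (M : 'cV[R]_n -> 'M[R]_n)
  (v : 'cV[R]_n -> 'cV[R]_n) (x : 'cV[R]_n) : 'M[R]_n :=
  \sum_(i < n) (v x i 0) *: partial M i x.

Definition qform (R : realType) (n : nat) (A : 'M[R]_n) (d : 'cV[R]_n) : R :=
  (d^T *m A *m d) 0 0.

Definition riemannian_metric (R : realType) (n : nat)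
  (M : 'cV[R]_n -> 'M[R]_n) : Prop :=
  smooth M /\ (forall x, (M x)^T = M x) /\
  (forall x (d : 'cV[R]_n), d != 0 -> 0 < qform (M x) d).

Definition uniformly_bounded (R : realType) (n : nat)
  (M : 'cV[R]_n -> 'M[R]_n) (alpha1 alpha2 : R) : Prop :=
  0 < alpha1 /\ alpha1 <= alpha2 /\
  forall x (d : 'cV[R]_n),
    qform (alpha1%:M) d <= qform (M x) d /\ qform (M x) d <= qform (alpha2%:M) d.

Definition colfield (R : realType) (n m : nat) (B : 'cV[R]_n -> 'M[R]_(n, m))
  (i : 'I_m) : 'cV[R]_n -> 'cV[R]_n := fun x => col i (B x).

Definition stronger_CCM (R : realType) (n m : nat)
  (g : 'cV[R]_n -> 'cV[R]_n) (B : 'cV[R]_n -> 'M[R]_(n, m))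
  (M : 'cV[R]_n -> 'M[R]_n) (lambda : R) : Prop :=
  (forall x (d : 'cV[R]_n), d != 0 -> d^T *m M x *m B x = 0 ->
     qform ((jacobian g x)^T *m M x + M x *m jacobian g x
            + dirM M g x + (2 * lambda) *: M x) d <= 0) /\
  (forall i : 'I_m, forall x,
     dirM M (colfield B i) x + (jacobian (colfield B i) x)^T *m M x
       + M x *m jacobian (colfield B i) x = 0).

(* Main.v *)
Require Import Defs.
From HB Require Import structures.
From mathcomp Require Import all_boot all_order all_algebra.
From mathcomp Require Import all_classical all_reals all_analysis.
From mathcomp Require Import ring lra.
Import Order.TTheory GRing.Theory Num.Theory.
Import numFieldNormedType.Exports.
Local Open Scope ring_scope.

Section helpers.
Context {R : realType} {V : normedModType R}.

Lemma diffder (W : normedModType R) (F : V -> W) x v :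
  differentiable F x -> derivable F x v.
Proof. exact: diff_derivable. Qed.

Lemma isdB (f g : V -> R) x v df dg : is_derive x v f df -> is_derive x v g dg ->
  is_derive x v (fun y => f y - g y) (df - dg).
Proof. by move=> h1 h2; exact: is_deriveB. Qed.

Lemma isdM (f g : V -> R) x v df dg : is_derive x v f df -> is_derive x v g dg ->
  is_derive x v (fun y => f y * g y) (df * g x + f x * dg).
Proof.
move=> h1 h2.
have d1 : derivable f x v by case: h1.
have d2 : derivable g x v by case: h2.
apply: DeriveDef.
  exact: (@derivableM R V f g x v d1 d2).
rewrite (@deriveM R V f g x v d1 d2) !derive_val.
by rewrite /GRing.scale /= addrC mulrC.
Qed.

Lemma isdsum k (h : 'I_k -> V -> R) x v dh :
  (forall i, is_derive x v (h i) (dh i)) ->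
  is_derive x v (fun y => \sum_(i < k) h i y) (\sum_(i < k) dh i).
Proof. by move=> H; have := is_derive_sum H; rewrite fct_sumE. Qed.

Lemma isdcst (c : R) x v : is_derive x v (fun _ : V => c) 0.
Proof. apply: DeriveDef; [exact: derivable_cst | exact: derive_cst]. Qed.

Lemma isdent a b (F : V -> 'M[R]_(a, b)) x v i j : derivable F x v ->
  is_derive x v (fun y => F y i j) ('D_v (fun y => F y i j) x).
Proof. by move=> /derivable_mxP h; apply: derivableP; apply: h. Qed.

Lemma Dentry a b (F : V -> 'M[R]_(a, b)) x v i j : derivable F x v ->
  ('D_v F x) i j = 'D_v (fun y => F y i j) x.
Proof. by move=> h; rewrite derive_mx // mxE. Qed.

End helpers.
Arguments diffder {R V W F x} v.
Arguments isdent {R V a b F x v} i j.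
Arguments Dentry {R V a b F x v} i j.


Section qf.
Context {R : realType} {n : nat}.
Implicit Types (A C : 'M[R]_n) (d : 'cV[R]_n).

Lemma qformD A C d : qform (A + C) d = qform A d + qform C d.
Proof. by rewrite /qform mulmxDr mulmxDl mxE. Qed.
Lemma qformN A d : qform (- A) d = - qform A d.
Proof. by rewrite /qform mulmxN mulNmx mxE. Qed.
Lemma qformB A C d : qform (A - C) d = qform A d - qform C d.
Proof. by rewrite qformD qformN. Qed.
Lemma qformZ (a : R) A d : qform (a *: A) d = a * qform A d.
Proof. by rewrite /qform -scalemxAr -scalemxAl mxE. Qed.
Lemma qform0 d : qform 0 d = 0.
Proof. by rewrite /qform mulmx0 mul0mx mxE. Qed.
Lemma qform_sum (I : Type) (r : seq I) (F : I -> 'M[R]_n) d :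
  qform (\sum_(i <- r) F i) d = \sum_(i <- r) qform (F i) d.
Proof.
elim/big_rec2: _ => [|i y1 y2 _ <-]; first exact: qform0.
by rewrite qformD.
Qed.
Lemma qform_tr A C d : C^T = C -> qform (A^T *m C) d = qform (C *m A) d.
Proof.
move=> hC; rewrite /qform.
have <- : (d^T *m (C *m A) *m d)^T = d^T *m (A^T *m C) *m d.
  by rewrite !trmx_mul trmxK hC !mulmxA.
by rewrite mxE.
Qed.
End qf.

Theorem lemma1 (R : realType) (n m p : nat)
  (f : 'cV[R]_n -> 'cV[R]_n) (B : 'cV[R]_n -> 'M[R]_(n, m))
  (phi : 'cV[R]_n -> 'M[R]_(p, m)) (theta : 'cV[R]_p)
  (M : 'cV[R]_n -> 'M[R]_n) (alpha1 alpha2 lambda : R) :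
  smooth f -> smooth B -> smooth phi ->
  riemannian_metric M -> uniformly_bounded M alpha1 alpha2 ->
  0 < lambda ->
  stronger_CCM f B M lambda ->
  stronger_CCM (fun x => f x - B x *m ((phi x)^T *m theta)) B M lambda.
Proof.
move=> hf hB hphi [_ [hMs _]] _ _ [C1 C2]; split; last exact: C2.
move=> x d d0 hdB.
have [df _] := hf 1%N; have [dB _] := hB 1%N; have [dphi _] := hphi 1%N.
set g := fun y : 'cV[R]_n => f y - B y *m ((phi y)^T *m theta).
pose w := fun y => (phi y)^T *m theta.
have Dg : forall v i, is_derive x v (fun y => g y i 0)
   ('D_v (fun y => f y i 0) x - \sum_(k < m) ('D_v (fun y => B y i k) x * w x k 0
      + B x i k * \sum_(l < p) ('D_v (fun y => phi y l k) x * theta l 0 + phi x l k * 0))).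
  move=> v i.
  have -> : (fun y => g y i 0) = fun y => f y i 0 -
       \sum_(k < m) (B y i k * \sum_(l < p) (phi y l k * theta l 0)).
    apply/funext => y; rewrite /g !mxE; congr (_ - _).
    by apply: eq_bigr => k _; rewrite !mxE; congr (_ * _); apply: eq_bigr => l _; rewrite mxE.
  apply: isdB; first exact/isdent/diff_derivable.
  apply: isdsum => k.
  have -> : w x k 0 = \sum_(l < p) phi x l k * theta l 0.
    by rewrite /w !mxE; apply: eq_bigr => l _; rewrite mxE.
  apply: isdM; first exact/isdent/diff_derivable.
  apply: isdsum => l; apply: isdM; first exact/isdent/diff_derivable.
have Dgv := fun v i => @derive_val _ _ _ _ _ _ _ (Dg v i).
have dgv : forall v, derivable g x v.
  move=> v; apply/derivable_mxP => i j; rewrite (ord1 j); by case: (Dg v i).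
have dBk : forall k v, derivable (colfield B k) x v.
  move=> k v; apply/derivable_mxP => i j.
  rewrite (_ : (fun y => colfield B k y i j) = fun y => B y i k).
    by case: (isdent i k (diffder v (dB x))).
  by apply/funext => y; rewrite /colfield mxE.
pose Jw := \matrix_(k < m, j < n)
   \sum_(l < p) 'D_(basis_vec R j) (fun y => phi y l k) x * theta l 0.
have hJ : Defs.jacobian g x = Defs.jacobian f x
   - \sum_(k < m) (w x k 0) *: Defs.jacobian (colfield B k) x - B x *m Jw.
  apply/matrixP => i j.
  rewrite !mxE summxE /partial (Dentry i 0 (dgv _)) (Dentry i 0 (diffder _ (df x))).
  rewrite Dgv.
  have hc : forall k, (w x k 0 *: Defs.jacobian (colfield B k) x) i j =
      w x k 0 * 'D_(basis_vec R j) (fun y => B y i k) x.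
    move=> k; rewrite !mxE /partial (Dentry i 0 (dBk k _)).
    rewrite (_ : (fun y => colfield B k y i 0) = fun y => B y i k) //.
    by apply/funext => y; rewrite /colfield mxE.
  rewrite (eq_bigr _ (fun k _ => hc k)).
  rewrite -addrA -opprD -big_split /=; congr (_ - _); apply: eq_bigr => k _.
  rewrite [X in _ = X + _]mulrC; congr (_ + _); rewrite mxE; congr (_ * _).
  by apply: eq_bigr => l _; rewrite mulr0 addr0.
have gi : forall i, g x i 0 = f x i 0 - \sum_(k < m) B x i k * w x k 0.
  by move=> i; rewrite /g /w !mxE.
have hD : dirM M g x = dirM M f x - \sum_(k < m) w x k 0 *: dirM M (colfield B k) x.
  rewrite /dirM; under eq_bigr => i _ do rewrite gi scalerBl scaler_suml.
  rewrite sumrB; congr (_ - _).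
  rewrite exchange_big /=; apply: eq_bigr => k _; rewrite scaler_sumr.
  by apply: eq_bigr => i _; rewrite scalerA /colfield [col _ _ _ _]mxE mulrC.
have E1 : qform (M x *m (Defs.jacobian f x
   - \sum_(k < m) (w x k 0) *: Defs.jacobian (colfield B k) x - B x *m Jw)) d
   = qform (M x *m Defs.jacobian f x) d
     - \sum_(k < m) w x k 0 * qform (M x *m Defs.jacobian (colfield B k) x) d.
  rewrite !mulmxBr !qformB mulmx_sumr qform_sum.
  have -> : qform (M x *m (B x *m Jw)) d = 0 by rewrite /qform !mulmxA hdB !mul0mx mxE.
  rewrite subr0; congr (_ - _); apply: eq_bigr => k _; by rewrite -scalemxAr qformZ.
have K : forall k, qform (dirM M (colfield B k) x) d
    = - (2 * qform (M x *m Defs.jacobian (colfield B k) x) d).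
  move=> k; have := congr1 (fun A => qform A d) (C2 k x).
  rewrite /= !qformD qform0 (qform_tr _ _ _ (hMs x)) => h; lra.
have S : \sum_(k < m) w x k 0 * qform (dirM M (colfield B k) x) d =
   - (2 * \sum_(k < m) w x k 0 * qform (M x *m Defs.jacobian (colfield B k) x) d).
  rewrite mulr_sumr -sumrN; apply: eq_bigr => k _; rewrite K; ring.
have S' : qform (\sum_(k < m) w x k 0 *: dirM M (colfield B k) x) d =
   - (2 * \sum_(k < m) w x k 0 * qform (M x *m Defs.jacobian (colfield B k) x) d).
  rewrite qform_sum -S; apply: eq_bigr => k _; exact: qformZ.
have := C1 x d d0 hdB.
rewrite hJ hD !qformD !(qform_tr _ _ _ (hMs x)) qformN S' E1.
lra.
Qed.
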